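(* Let $B$ be the set of irrational $x\in(0,1)$ whose $\bar O^1$-symbols are bounded, i.e. there exists $K_x\in\mathbb{N}$ with $g_k(x)\le K_x$ for all $k\in\mathbb{N}$. Then $\dim_H(B)=0$.
   Context: Every irrational $x\in(0,1)$ has a unique representation ($\bar O^1$-expansion) $$x=\sum_{k=1}^\infty\frac{(-1)^{k-1}}{g_1(g_1+g_2)\cdots(g_1+g_2+\dots+g_k)},\qquad g_k=g_k(x)\in\mathbb{N}=\{1,2,3,\dots\}.$$ The numbers $g_k(x)$ are called the $\bar O^1$-symbols of $x$. $\dim_H$ denotes Hausdorff dimension. *)

(* Defs.v *)
From HB Require Import structures.
From mathcomp Require Import all_boot all_order all_algebra.
From mathcomp Require Import all_classical all_reals all_analysis.
Set Implicit Arguments. Unset Strict Implicit. Unset Printing Implicit Defensive.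
Import Order.TTheory GRing.Theory Num.Theory.
Import numFieldNormedType.Exports.
Local Open Scope classical_set_scope.
Local Open Scope ring_scope.

Section O1.
Variable R : realType.

Definition irrational (x : R) : Prop := ~ exists q : rat, x = ratr q.

(* k-th term (0-based, k = paper's k-1) of the O1-bar series built from the
   digit sequence g, where g j stands for the paper's g_{j+1}:
   (-1)^k / (g_1 (g_1+g_2) ... (g_1+...+g_{k+1})) *)
Definition O1_term (g : nat -> nat) (k : nat) : R :=
  (-1) ^+ k / (\prod_(i < k.+1) (\sum_(j < i.+1) g j)%N%:R).

Definition is_O1_expansion (x : R) (g : nat -> nat) : Prop :=
  (forall k, (0 < g k)%N) /\
  (fun n => \sum_(k < n) O1_term g k) @ \oo --> x.

(* The O1-bar symbols of x: (O1_symbols x) j = g_{j+1}(x), the digits of the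
   (unique, for irrational x in (0,1)) O1-bar expansion of x. *)
Definition O1_symbols (x : R) : nat -> nat := get (is_O1_expansion x).

Definition O1_bounded_set : set R :=
  [set x | irrational x /\ 0 < x < 1 /\
           exists K : nat, forall k, (O1_symbols x k <= K)%N].

Local Open Scope ereal_scope.

Definition diam (U : set R) : \bar R :=
  ereal_sup ([set 0%E] `|` [set (`|x - y|)%:E | x in U & y in U]).

Definition cover_term (s : R) (U : set R) : \bar R :=
  if asbool (U = set0) then 0%E else ((fine (diam U)) `^ s)%:E.

Definition hausdorff_pre (s delta : R) (A : set R) : \bar R :=
  ereal_inf [set \sum_(0 <= i <oo) cover_term s (U i) |
               U in [set U : nat -> set R |
                       A `<=` \bigcup_i U i /\
                       forall i, diam (U i) <= delta%:E]].

(* H^s(A) = lim_{delta -> 0+} H^s_delta(A) = sup_{delta > 0} H^s_delta(A) *)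
Definition hausdorff_measure (s : R) (A : set R) : \bar R :=
  ereal_sup [set hausdorff_pre s delta A | delta in [set d : R | (0 < d)%R]].

Definition hausdorff_dim (A : set R) : R :=
  inf [set s : R | (0 <= s)%R /\ hausdorff_measure s A = 0].

End O1.

(* Main.v *)
Require Import Defs.
From HB Require Import structures.
From mathcomp Require Import all_boot all_order all_algebra.
From mathcomp Require Import all_classical all_reals all_analysis.
From mathcomp Require Import ring lra zify.
Import Order.TTheory GRing.Theory Num.Theory.
Import numFieldNormedType.Exports.
Local Open Scope classical_set_scope.
Local Open Scope ring_scope.

Lemma irr_step {R : realType} (y : R) (s : nat) :
  Defs.irrational y -> (0 < s)%N -> Defs.irrational (1 - s%:R * y).
Proof.
rewrite /Defs.irrational => Hy s0 [q Hq]; apply: Hy; exists ((1 - q) / s%:R).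
have sN0 : (s%:R : R) != 0 by rewrite pnatr_eq0 -lt0n.
rewrite (fmorph_div (ratr : {rmorphism rat -> R})) rmorphB rmorph1 rmorph_nat.
transitivity ((1 - (1 - s%:R*y))/s%:R); [by field | congr (_ / _); congr (_ - _); exact: Hq].
Qed.

Definition st_step {R : realType} (p : R * nat) : R * nat :=
  let s := Num.truncn (p.1^-1) in (1 - s%:R * p.1, s).

Fixpoint st {R : realType} (x : R) (n : nat) : R * nat :=
  if n is k.+1 then st_step (st x k) else (x, 0%N).

Lemma st_inv {R : realType} (x : R) : Defs.irrational x -> 0 < x < 1 ->
  forall k, [/\ Defs.irrational (st x k).1, 0 < (st x k).1,
     (st x k).1 * ((st x k).2%:R + 1) < 1 & (k <= (st x k).2)%N].
Proof.
move=> Hx /andP[x0 x1]; elim=> [|k [Hi Hp Hl Hk]] /=.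
  by rewrite add0r mulr1.
set y := (st x k).1 in Hi Hp Hl *; set sp := (st x k).2 in Hl Hk *.
rewrite /st_step /=. fold y.
set s := Num.truncn y^-1.
have yi0 : 0 <= y^-1 by rewrite invr_ge0 ltW.
have /andP[sle slt] := Num.Theory.truncn_itv yi0.
have sge : (sp.+1 <= s)%N.
  by rewrite /s Num.Theory.truncn_ge_nat // -div1r ler_pdivlMr // -natr1 mulrC ltW.
have s0 : (0 < s)%N by apply: leq_trans sge.
have sy1 : s%:R * y <= 1 by rewrite -ler_pdivlMr // div1r.
have sy2 : 1 < (s%:R + 1) * y by rewrite -ltr_pdivrMr // div1r natr1.
have syn : s%:R * y != 1.
  apply/negP => /eqP E; move: Hi; rewrite /Defs.irrational; apply; exists (s%:R^-1).
  have sN0 : (s%:R : R) != 0 by rewrite pnatr_eq0 -lt0n.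
  rewrite (fmorphV (ratr : {rmorphism rat -> R})) rmorph_nat; apply: (mulfI sN0); by rewrite E mulfV.
split.
- exact: irr_step.
- by rewrite subr_gt0 lt_neqAle sy1 andbT.
- have sp0 : (0:R) < s%:R by rewrite ltr0n.
  have : (0:R) < s%:R * ((s%:R + 1) * y - 1) by rewrite mulr_gt0 // subr_gt0.
  rewrite /=; nra.
- exact: leq_trans sge.
Qed.

Lemma st_incr {R : realType} (x : R) : Defs.irrational x -> 0 < x < 1 ->
  forall k, ((st x k).2 < (st x k.+1).2)%N.
Proof.
move=> Hx H01 k; have [Hi Hp Hl Hk] := st_inv x Hx H01 k.
rewrite [(st x k.+1)]/= /st_step /=.
set y := (st x k).1 in Hi Hp Hl *; set sp := (st x k).2 in Hl Hk *.
have yi0 : 0 <= y^-1 by rewrite invr_ge0 ltW.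
by rewrite Num.Theory.truncn_ge_nat // -div1r ler_pdivlMr // -natr1 mulrC ltW.
Qed.

Definition gdig {R : realType} (x : R) (k : nat) : nat :=
  if k is k'.+1 then ((st x k'.+2).2 - (st x k'.+1).2)%N else (st x 1).2.

Lemma gdig_sum {R : realType} (x : R) : Defs.irrational x -> 0 < x < 1 ->
  forall i, (\sum_(j < i.+1) gdig x j)%N = (st x i.+1).2.
Proof.
move=> Hx H01; elim=> [|i IH]; first by rewrite big_ord1.
by rewrite big_ord_recr /= IH subnKC // ltnW // (st_incr x Hx H01).
Qed.

Lemma gdig_pos {R : realType} (x : R) : Defs.irrational x -> 0 < x < 1 ->
  forall k, (0 < gdig x k)%N.
Proof.
move=> Hx H01 [|k]; rewrite /gdig.
  by have [_ _ _] := st_inv x Hx H01 1.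
by rewrite subn_gt0; apply: (st_incr x Hx H01).
Qed.

Lemma st_ident {R : realType} (x : R) : Defs.irrational x -> 0 < x < 1 ->
  forall n, x = \sum_(k < n) O1_term R (gdig x) k +
     (-1) ^+ n * (st x n).1 / \prod_(i < n) ((st x i.+1).2)%:R.
Proof.
move=> Hx H01; elim=> [|n IH].
  by rewrite big_ord0 big_ord0 add0r expr0 mul1r divr1.
rewrite big_ord_recr /= {1}IH -addrA; congr (_ + _).
rewrite /O1_term.
rewrite (eq_bigr (fun i : 'I_n.+1 => ((st x i.+1).2)%:R)); last first.
  by move=> i _; rewrite gdig_sum.
rewrite big_ord_recr /= /st_step /=.
set y := (st x n).1; set P := \prod_(i < n) _.
set s := Num.truncn y^-1.
have Hs : (st x n.+1).2 = s by [].
have P0 : P != 0.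
  rewrite /P prodf_seq_neq0; apply/allP => i _ /=.
  by rewrite pnatr_eq0 -lt0n; apply: leq_trans (ltn0Sn i) _; have [_ _ _] := st_inv x Hx H01 i.+1.
have s0 : (s%:R : R) != 0.
  by rewrite pnatr_eq0 -lt0n -Hs; have [_ _ _ /(leq_trans (ltn0Sn n))] := st_inv x Hx H01 n.+1.
rewrite exprS; field.
by rewrite P0 s0.
Qed.

Lemma O1_exists {R : realType} (x : R) : Defs.irrational x -> 0 < x < 1 ->
  is_O1_expansion x (gdig x).
Proof.
move=> Hx H01; split; first exact: gdig_pos.
apply/cvgrPdist_le => e e0.
have := @cvg_harmonic R; move/cvgrPdist_le => /(_ e e0).
apply: filterS => n; rewrite sub0r normrN => Hn.
rewrite {1}(st_ident x Hx H01 n) addrC addKr.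
have [Hi Hp Hl Hk] := st_inv x Hx H01 n.
set y := (st x n).1 in Hp Hl *.
set P := \prod_(i < n) _.
have P1 : 1 <= P.
  rewrite /P -natr_prod ler1n prodn_gt0 // => i.
  by have [_ _ _ /(leq_trans (ltn0Sn i))] := st_inv x Hx H01 i.+1.
have P0 : 0 < P by apply: lt_le_trans P1.
rewrite -mulrA normrM normrX normrN1 expr1n mul1r ger0_norm; last first.
  by rewrite divr_ge0 // ltW.
apply: le_trans Hn; rewrite ger0_norm ?harmonic_ge0 //.
rewrite ler_pdivrMr // /harmonic /=.
apply: (@le_trans _ _ (n.+1%:R^-1)); last first.
  by rewrite ler_peMr // invr_ge0.
rewrite -div1r ler_pdivlMr // ltW //; apply: le_lt_trans Hl.
rewrite ler_wpM2l ?(ltW Hp) // natr1 ler_nat ltnS; exact: Hk.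
Qed.

Lemma prod_fact_le (g : nat -> nat) : (forall k, (0 < g k)%N) ->
  forall k, ((k.+1)`! <= \prod_(i < k.+1) \sum_(j < i.+1) g j)%N.
Proof.
move=> gp; elim=> [|k IH].
  by rewrite big_ord1 big_ord1; exact: gp.
rewrite factS big_ord_recr /= mulnC leq_mul //.
have : (\sum_(j < k.+2) 1 <= \sum_(j < k.+2) g j)%N by apply: leq_sum => j _; exact: gp.
by rewrite sum_nat_const card_ord muln1.
Qed.

Lemma term_le {R : realType} (g : nat -> nat) : (forall k, (0 < g k)%N) ->
  forall k, `|O1_term R g k| <= ((k.+1)`!%:R)^-1.
Proof.
move=> gp k; rewrite /O1_term -natr_prod normrM normrX normrN1 expr1n mul1r.
have f0 : (0 : R) < (k.+1)`!%:R by rewrite ltr0n fact_gt0.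
have Hle := @prod_fact_le g gp k.
rewrite ger0_norm ?invr_ge0 ?ler0n // lef_pV2 ?posrE ?ler_nat //.
by apply: lt_le_trans f0 _; rewrite ler_nat.
Qed.

Lemma fact_half {R : realType} k : 2 * ((k.+2)`!%:R)^-1 <= ((k.+1)`!%:R : R)^-1.
Proof.
rewrite factS natrM invfM mulrA ler_piMl ?invr_ge0 ?ler0n //.
by rewrite ler_pdivrMr ?ltr0n // mul1r ler_nat.
Qed.

Lemma partial_diff {R : realType} (g : nat -> nat) : (forall k, (0 < g k)%N) ->
  forall n d, `|\sum_(k < n + d) O1_term R g k - \sum_(k < n) O1_term R g k|
      <= 2 * (((n.+1)`!%:R)^-1 - (((n + d).+1)`!%:R)^-1).
Proof.
move=> gp n; elim=> [|d IH].
  by rewrite addn0 subrr normr0 subrr mulr0.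
rewrite addnS big_ord_recr /= addrAC.
apply: le_trans (ler_normD _ _) _.
apply: le_trans (lerD IH (term_le g gp _)) _.
have := @fact_half R (n + d).
set a := ((n + d).+1)`!%:R^-1; set b := ((n+d).+2)`!%:R^-1; lra.
Qed.

Lemma tail_bound {R : realType} (x : R) g : is_O1_expansion x g ->
  forall n, `|x - \sum_(k < n) O1_term R g k| <= 2 * ((n.+1)`!%:R)^-1.
Proof.
move=> [gp Hc] n.
set S := fun m => \sum_(k < m) O1_term R g k.
have Hc2 : (fun m => `|S m - S n|) @ \oo --> `|x - S n|.
  by apply: cvg_norm; apply: cvgB => //; exact: cvg_cst.
rewrite -(cvg_lim _ Hc2) //.
apply: limr_le; first by apply/cvg_ex; exists `|x - S n|.
exists n => // m /= Hm.
rewrite -(subnKC Hm); apply: le_trans (partial_diff g gp n (m - n)) _.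
rewrite ler_pM2l // lerBlDr lerDl invr_ge0 ler0n //.
Qed.

Lemma exp_coeff_small {R : realType} (z e : R) : 0 < e ->
  \forall n \near \oo, `|z ^+ n / n`!%:R| <= e.
Proof.
move=> e0.
have := cvg_series_cvg_0 (is_cvg_series_exp_coeff z).
move/cvgr0_norm_le => /(_ e e0); apply: filterS => n.
by rewrite /exp_coeff /=.
Qed.

Lemma exists_n {R : realType} (s delta eta : R) (m : nat) :
  0 < s -> 0 < delta -> 0 < eta ->
  exists n : nat, 4 * ((n.+1)`!%:R)^-1 <= delta /\
    (m.+1 ^ n)%:R * (4 * ((n.+1)`!%:R)^-1) `^ s <= eta.
Proof.
move=> s0 d0 e0.
set b : R := ((m.+1)%:R * 2)^-1.
have b0 : 0 < b by rewrite invr_gt0 mulr_gt0 // ltr0n.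
set q := b `^ (s^-1).
have q0 : 0 < q by rewrite powR_gt0.
have qs : q `^ s = b by rewrite /q -powRrM mulVf ?gt_eqF // powRr1 // ltW.
have d4 : 0 < delta / 4 by rewrite divr_gt0.
have H1 := exp_coeff_small 1 (delta / 4) d4.
have i4 : (0:R) < 4^-1 by rewrite invr_gt0.
have H2 := exp_coeff_small (q^-1) (4^-1) i4.
have H3 : \forall n \near \oo, `|(2^-1 : R) ^+ n| <= eta.
  have h : `|(2^-1 : R)| < 1 by rewrite ger0_norm ?invr_ge0 // invf_lt1 // ltr1n.
  by have := cvg_expr h; move/cvgr0_norm_le => /(_ eta e0).
have [N _ HN] : \forall n \near \oo, [/\ `|1 ^+ n / n`!%:R| <= delta / 4,
   `|q^-1 ^+ n / n`!%:R| <= 4^-1 & `|(2^-1 : R) ^+ n| <= eta].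
  by near=> n; split; near: n.
have [h1 h2 h3] := HN N (leqnn N).
set n := N in h1 h2 h3 *.
exists n.
have f0 : (0:R) < n`!%:R by rewrite ltr0n fact_gt0.
have hf : ((n.+1)`!%:R)^-1 <= (n`!%:R : R)^-1.
  by rewrite lef_pV2 ?posrE ?ltr0n ?fact_gt0 // ler_nat factS leq_pmull.
have Q0 : 0 < q ^+ n by rewrite exprn_gt0.
have key : 4 * ((n.+1)`!%:R)^-1 <= q ^+ n.
  move: h2; rewrite ger0_norm; last by rewrite divr_ge0 ?ltW // exprn_gt0 // invr_gt0.
  rewrite exprVn -invfM lef_pV2 ?posrE ?mulr_gt0 // => h2.
  apply: le_trans (ler_wpM2l _ hf) _; first by [].
  by rewrite mulrC ler_pdivrMl // mulrC.
split.
  move: h1; rewrite expr1n ger0_norm; last by rewrite divr_ge0 // ltW.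
  move=> h1.
  have : 4 * (n`!%:R : R)^-1 <= delta by rewrite mulrC -ler_pdivlMr // -[_^-1]mul1r.
  by move=> h; apply: le_trans h; rewrite ler_wpM2l.
have a0 : 0 <= 4 * ((n.+1)`!%:R : R)^-1 by rewrite mulr_ge0 // invr_ge0.
apply: le_trans h3; rewrite ger0_norm ?exprn_ge0 ?invr_ge0 //.
apply: (@le_trans _ _ ((m.+1 ^ n)%:R * b ^+ n)).
  rewrite ler_wpM2l //.
  rewrite -qs -(powR_mulrn _ (powR_ge0 q s)) powRAC (powR_mulrn _ (ltW q0)).
  apply: ge0_ler_powR; [exact: ltW | by rewrite nnegrE | by rewrite nnegrE ltW | exact: key].
rewrite natrX -exprMn /b invfM mulrA mulfV ?mul1r // pnatr_eq0.
Unshelve. all: by end_near.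
Qed.

Local Open Scope ereal_scope.
Lemma diam_ball {R : realType} (c r : R) : (0 <= r)%R ->
  0 <= diam [set y | `|y - c| <= r]%R /\ diam [set y | `|y - c| <= r]%R <= (2 * r)%:E.
Proof.
move=> r0; split.
  by apply: ereal_sup_ubound; left.
apply: ge_ereal_sup => z [-> | [x Hx [y Hy <-]]].
  by rewrite lee_fin mulr_ge0.
rewrite lee_fin; apply: le_trans (ler_distD c x y) _.
by rewrite mulr2n mulrDl mul1r lerD // distrC.
Qed.

Lemma cover_ball {R : realType} (s c r : R) : (0 <= r)%R -> (0 <= s)%R ->
  cover_term s [set y | `|y - c| <= r]%R <= (((2 * r) `^ s)%R)%:E.
Proof.
move=> r0 s0; have [h1 h2] := diam_ball c r r0.
rewrite /cover_term; case: asbool; first by rewrite lee_fin powR_ge0.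
move: h1 h2; case: (diam _) => [d | | ] //= h1 h2.
rewrite lee_fin; apply: ge0_ler_powR => //; rewrite ?nnegrE -?lee_fin //.
by rewrite lee_fin mulr_ge0.
Qed.

Lemma cover_termE {R : realType} (s : R) A : cover_term s A = (fine (cover_term s A))%:E.
Proof. by rewrite /cover_term; case: asbool. Qed.

Lemma cover_term_ge0 {R : realType} (s : R) A : 0 <= cover_term s A.
Proof. by rewrite /cover_term; case: asbool; rewrite // lee_fin powR_ge0. Qed.

Lemma diam_set0 {R : realType} : diam (@set0 R) = 0.
Proof.
apply/le_anti/andP; split; last by apply: ereal_sup_ubound; left.
by apply: ge_ereal_sup => z [-> // | [x []]].
Qed.
Local Close Scope ereal_scope.

Definition wordT {m n : nat} (t : n.-tuple 'I_m.+1) : nat -> nat :=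
  fun i => (nth ord0 t i : nat).+1.
Definition Tenum (nb : nat -> nat) (m : nat) : seq ((nb m).-tuple 'I_m.+1) :=
  enum {: (nb m).-tuple 'I_m.+1}.
Definition bsz nb m := size (Tenum nb m).
Definition tup nb m j := nth (nseq_tuple (nb m) ord0) (Tenum nb m) j.
Definition ctr {R : realType} nb m j : R :=
  \sum_(k < nb m) O1_term R (wordT (tup nb m j)) k.
Definition Vb {R : realType} nb m j : set R :=
  [set y | `|y - ctr nb m j| <= 2 * ((nb m).+1`!%:R)^-1].
Definition start nb m := (\sum_(k < m) bsz nb k)%N.
Definition Ub {R : realType} nb i : set R :=
  [set y | exists m j, i = (start nb m + j)%N /\ (j < bsz nb m)%N /\ Vb nb m j y].

Lemma bszE nb m : bsz nb m = (m.+1 ^ nb m)%N.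
Proof. by rewrite /bsz /Tenum -cardE card_tuple card_ord. Qed.

Lemma bsz_gt0 nb m : (0 < bsz nb m)%N.
Proof. by rewrite bszE expn_gt0. Qed.

Lemma startS nb m : start nb m.+1 = (start nb m + bsz nb m)%N.
Proof. by rewrite /start big_ord_recr. Qed.

Lemma start_mono nb m d : (start nb m <= start nb (m + d))%N.
Proof. elim: d => [|d IH]; first by rewrite addn0. rewrite addnS startS; apply: leq_trans IH _; exact: leq_addr. Qed.

Lemma decode nb m j m' j' : (start nb m + j = start nb m' + j')%N ->
  (j < bsz nb m)%N -> (j' < bsz nb m')%N -> m = m'.
Proof.
move=> E hj hj'.
case: (ltngtP m m') => // H.
- have := start_mono nb m.+1 (m' - m.+1); rewrite subnKC // startS => H2; lia.
- have := start_mono nb m'.+1 (m - m'.+1); rewrite subnKC // startS => H2; lia.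
Qed.

Lemma Ub_eq {R : realType} nb m j : (j < bsz nb m)%N ->
  Ub nb (start nb m + j)%N = Vb (R:=R) nb m j.
Proof.
move=> hj; apply/seteqP; split => y.
  move=> [m' [j' [E [hj' Hv]]]].
  have em := @decode nb m j m' j' E hj hj'; subst m'.
  by move/addnI: E => ->.
by move=> Hv; exists m, j.
Qed.

Lemma Ub_cases {R : realType} nb i :
  Ub (R:=R) nb i = set0 \/ exists m j, (j < bsz nb m)%N /\ i = (start nb m + j)%N.
Proof.
case: (pselect (exists m j, (j < bsz nb m)%N /\ i = (start nb m + j)%N)) => [h|h].
  by right.
left; apply/seteqP; split => y // [m [j [E [hj _]]]].
by exfalso; apply: h; exists m, j.
Qed.

Lemma block_sum {R : realType} (c : nat -> R) nb (w : nat -> R) :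
  (forall m j, (j < bsz nb m)%N -> c (start nb m + j)%N <= w m) ->
  forall M, \sum_(i < start nb M) c i <= \sum_(m < M) (bsz nb m)%:R * w m.
Proof.
move=> hw; elim=> [|M IH]; first by rewrite /start !big_ord0.
rewrite startS big_split_ord /= big_ord_recr /=; apply: lerD => //.
apply: (@le_trans _ _ (\sum_(i < bsz nb M) w M)); first by apply: ler_sum => j _; exact: hw.
by rewrite sumr_const card_ord mulr_natl.
Qed.

Lemma start_ge nb N : (N <= start nb N)%N.
Proof.
elim: N => [|N IH] //; rewrite startS.
by have := bsz_gt0 nb N; lia.
Qed.

Lemma psum_mono {R : realType} (c : nat -> R) : (forall i, 0 <= c i) ->
  forall m n, (m <= n)%N -> \sum_(i < m) c i <= \sum_(i < n) c i.
Proof.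
move=> c0 m n /subnKC <-; rewrite big_split_ord /= lerDl.
by apply: sumr_ge0 => i _.
Qed.

Lemma geom_sum {R : realType} (e : R) M :
  \sum_(m < M) e / 2 ^+ m.+1 = e - e / 2 ^+ M.
Proof.
elim: M => [|M IH]; first by rewrite big_ord0 expr0 divr1 subrr.
rewrite big_ord_recr /= IH exprS; field.
by rewrite expf_neq0.
Qed.

Lemma total_sum {R : realType} (c : nat -> R) nb (w : nat -> R) (e : R) :
  0 <= e -> (forall i, 0 <= c i) ->
  (forall m j, (j < bsz nb m)%N -> c (start nb m + j)%N <= w m) ->
  (forall m, (bsz nb m)%:R * w m <= e / 2 ^+ m.+1) ->
  forall N, \sum_(i < N) c i <= e.
Proof.
move=> e0 c0 hw hb N.
have h1 := psum_mono c c0 _ _ (start_ge nb N).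
have h2 := @block_sum _ c nb w hw N.
have h3 : \sum_(m < N) (bsz nb m)%:R * w m <= \sum_(m < N) e / 2 ^+ m.+1.
  by apply: ler_sum => m _; exact: hb.
have h4 : \sum_(m < N) e / 2 ^+ m.+1 <= e.
  by rewrite geom_sum lerBlDr lerDl divr_ge0 // exprn_ge0.
exact: le_trans h1 (le_trans h2 (le_trans h3 h4)).
Qed.

Lemma O1_term_eq {R : realType} (g g' : nat -> nat) k :
  (forall i, (i <= k)%N -> g i = g' i) -> O1_term R g k = O1_term R g' k.
Proof.
move=> H; rewrite /O1_term; congr (_ / _); apply: eq_bigr => i _.
congr (_%:R); apply: eq_bigr => j _; apply: H.
exact: leq_trans (ltnSE (ltn_ord j)) (ltnSE (ltn_ord i)).
Qed.

Lemma B_cover {R : realType} (x : R) nb : O1_bounded_set x -> exists i, Ub nb i x.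
Proof.
move=> [Hx [H01 [K HK]]].
have Hg : is_O1_expansion x (O1_symbols x).
  by rewrite /O1_symbols; apply: getPex; exists (gdig x); exact: O1_exists.
set g := O1_symbols x in HK Hg.
have gp := Hg.1.
set m := K.-1.
have gle : forall i, (g i <= m.+1)%N.
  move=> i; rewrite /m prednK; first exact: HK.
  exact: leq_trans (gp 0%N) (HK 0%N).
set n := nb m.
set t : n.-tuple 'I_m.+1 := [tuple inord (g i).-1 | i < n].
set j := index t (Tenum nb m).
have tin : t \in Tenum nb m by rewrite /Tenum mem_enum.
have hj : (j < bsz nb m)%N by rewrite /bsz index_mem.
exists (start nb m + j)%N; rewrite Ub_eq //.
rewrite /Vb /ctr /tup nth_index //.
have -> : \sum_(k < nb m) O1_term R (wordT t) k = \sum_(k < n) O1_term R g k.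
  apply: eq_bigr => k _; apply: O1_term_eq => i hi.
  have hin : (i < n)%N by exact: leq_ltn_trans hi (ltn_ord k).
  rewrite /wordT.
  have := nth_mktuple (fun i : 'I_n => (inord (g i).-1 : 'I_m.+1)) ord0 (Ordinal hin).
  move=> /= ->; rewrite inordK ?prednK //.
  exact: leq_trans (gp 0%N) (HK 0%N).
exact: (@tail_bound R x g Hg n).
Qed.

Lemma pre_zero {R : realType} (s delta : R) : 0 < s -> 0 < delta ->
  hausdorff_pre s delta (@O1_bounded_set R) = 0%E.
Proof.
move=> s0 d0.
apply/le_anti/andP; split; last first.
  apply: le_ereal_inf_tmp => z [U _ <-].
  by apply: nneseries_ge0 => k _ _; exact: cover_term_ge0.
apply/lee_addgt0Pr => e e0; rewrite add0e.
have epos : forall m : nat, 0 < e / 2 ^+ m.+1 by move=> m; rewrite divr_gt0 // exprn_gt0.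
have [nb Hnb] := choice (fun m => @exists_n R s delta (e / 2 ^+ m.+1) m s0 d0 (epos m)).
apply: ge_ereal_inf; exists (\sum_(0 <= i <oo) cover_term s (Ub nb i))%E; last first.
  apply: lime_le.
    by apply: is_cvg_nneseries => k _ _; exact: cover_term_ge0.
  exists 0%N => // N _ /=.
  rewrite (eq_bigr (fun i => (fine (cover_term s (Ub nb i)))%:E)); last first.
    by move=> i _; exact: cover_termE.
  rewrite sumEFin lee_fin big_mkord.
  apply: (@total_sum R (fun i => fine (cover_term s (Ub nb i))) nb
            (fun m => (2 * (2 * ((nb m).+1`!%:R)^-1)) `^ s)).
  - exact: ltW.
  - by move=> i; rewrite fine_ge0 // cover_term_ge0.
  - move=> m j hj; rewrite Ub_eq //.
    have r0 : 0 <= 2 * ((nb m).+1`!%:R : R)^-1 by rewrite mulr_ge0 // invr_ge0.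
    have := cover_ball s (ctr nb m j) _ r0 (ltW s0).
    by rewrite cover_termE lee_fin.
  - move=> m; rewrite bszE.
    have [_ h] := Hnb m.
    have E4 : (2 * 2 : R) = 4 by rewrite -natrM.
    by rewrite mulrA E4.
exists (Ub nb) => //; split.
  by move=> x Bx; have [i Hi] := B_cover x nb Bx; exists i.
move=> i; case: (Ub_cases (R:=R) nb i) => [-> | [m [j [hj ->]]]].
  by rewrite diam_set0 lee_fin ltW.
rewrite Ub_eq //.
have r0 : 0 <= 2 * ((nb m).+1`!%:R : R)^-1 by rewrite mulr_ge0 // invr_ge0.
have [_ h2] := diam_ball (ctr nb m j) _ r0.
apply: le_trans h2 _; rewrite lee_fin mulrA.
have E4 : (2 * 2 : R) = 4 by rewrite -natrM.
by have [h _] := Hnb m; rewrite E4.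
Qed.

Lemma meas_zero {R : realType} (s : R) : 0 < s ->
  hausdorff_measure s (@O1_bounded_set R) = 0%E.
Proof.
move=> s0; apply/le_anti/andP; split.
  by apply: ge_ereal_sup => z [d d0 <-]; rewrite pre_zero.
by apply: ereal_sup_ubound; exists 1; [exact: ltr01 | exact: pre_zero].
Qed.

Theorem corollary1 (R : realType) : hausdorff_dim (@O1_bounded_set R) = 0.
Proof.
rewrite /hausdorff_dim.
set S := [set s : R | 0 <= s /\ hausdorff_measure s (@O1_bounded_set R) = 0%E].
have Sp : forall e : R, 0 < e -> S e by move=> e e0; split; [exact: ltW | exact: meas_zero].
have hl : has_lbound S by exists 0 => z [].
apply/le_anti/andP; split.
  case: (ltrP 0 (inf S)) => // h.
  have := ge_inf hl (Sp (inf S / 2) (divr_gt0 h (ltr0n _ 2))).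
  lra.
apply: lb_le_inf; first by exists 1; apply: Sp.
by move=> z [].
Qed.
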